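(* For all $n\geq 1$, the spectral radius of $A_n$ is $2(1+\kappa_n)$, and hence the spectral radius of $M_n=(2(1+\kappa_n))^{-1}A_n$ is $1$.
   Context: For $\kappa\in(0,1/2)$, the paired tent map $T_\kappa:[-1,1]\to[-1,1]$ is $T_\kappa(x)=2(1+\kappa)(x+1)-1$ for $x\in[-1,-1/2]$, $T_\kappa(x)=-2(1+\kappa)x-1$ for $x\in[-1/2,0)$, $T_\kappa(0)=0$, $T_\kappa(x)=-2(1+\kappa)x+1$ for $x\in(0,1/2]$, $T_\kappa(x)=2(1+\kappa)(x-1)+1$ for $x\in[1/2,1]$. For $n\geq1$, $\kappa_n$ is the unique solution in $(0,1/2)$ of $(2+2\kappa)^n\kappa=1$, and $T_n=T_{\kappa_n}$. Let $r_0<\dots<r_{2n+4}$ enumerate increasingly the $2n+5$ distinct points of $\{-1,-1/2,0,1/2,1\}\cup\{T_n^i(\pm\kappa_n):0\le i\le n-1\}$ and $R_i=(r_{i-1},r_i)$. $A_n$ is the $(2n+4)\times(2n+4)$ matrix with $a_{ij}=1$ if $R_i\subset T_n(R_j)$ and $0$ otherwise. *)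

(* Defs.v *)
From HB Require Import structures.
From mathcomp Require Import all_boot all_order all_algebra.
From mathcomp Require Import complex.
From mathcomp Require Import boolp reals.
Set Implicit Arguments. Unset Strict Implicit. Unset Printing Implicit Defensive.
Import Order.TTheory GRing.Theory Num.Theory.
Local Open Scope ring_scope.

Section Tent.
Variable R : realType.

Definition tent (k x : R) : R :=
  if x <= - 2^-1 then 2 * (1 + k) * (x + 1) - 1
  else if x < 0 then - 2 * (1 + k) * x - 1
  else if x == 0 then 0
  else if x <= 2^-1 then - 2 * (1 + k) * x + 1
  else 2 * (1 + k) * (x - 1) + 1.

Definition points (n : nat) (k : R) : seq R :=
  sort <=%R (undup ([:: -1; - 2^-1; 0; 2^-1; 1]
     ++ [seq iter i (tent k) k | i <- iota 0 n]
     ++ [seq iter i (tent k) (- k) | i <- iota 0 n])).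

Definition pt (n : nat) (k : R) (i : nat) : R := nth 0 (points n k) i.

Definition interval_in_image (k a b c d : R) : Prop :=
  forall x, a < x < b -> exists y, c < y < d /\ tent k y = x.

(* A_n: row/column index i : 'I_(2n+4) stands for R_{i+1} = (r_i, r_{i+1}). *)
Definition Amx (n : nat) (k : R) : 'M[R]_(2 * n + 4) :=
  \matrix_(i, j) (if `[< interval_in_image k (pt n k i) (pt n k i.+1)
                                          (pt n k j) (pt n k j.+1) >]
                  then 1 else 0).

Definition is_spectral_radius (m : nat) (M : 'M[R]_m) (rho : R) : Prop :=
  (exists l : R[i], eigenvalue (map_mx (real_complex R) M) l /\ `|l| = (rho%:C)%C)
  /\ (forall l : R[i], eigenvalue (map_mx (real_complex R) M) l -> `|l| <= (rho%:C)%C).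

End Tent.

(* Main.v *)
Require Import Defs.
From HB Require Import structures.
From mathcomp Require Import all_boot all_order all_algebra.
From mathcomp Require Import complex.
From mathcomp Require Import boolp reals.
From mathcomp Require Import ring lra zify.
Import Order.TTheory GRing.Theory Num.Theory.
Local Open Scope ring_scope.

Section Perron.
Variable R : realType.
Local Notation C := (R[i]).
Local Notation rc := (real_complex R).

Lemma eig_tr (m : nat) (g : 'M[C]_m) a : eigenvalue g^T a = eigenvalue g a.
Proof.
rewrite /eigenvalue /eigenspace !kermx_eq0 !row_free_unit -unitmx_tr.
by rewrite linearB /= trmxK tr_scalar_mx.
Qed.

Lemma perron (m : nat) (M : 'M[R]_m) (l : 'rV[R]_m) (rho : R) :
  (0 < m)%N -> (forall i j, 0 <= M i j) -> (forall i, 0 < l 0 i) ->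
  l *m M = rho *: l -> 0 <= rho ->
  is_spectral_radius M rho.
Proof.
move=> m0 Mge0 lgt0 eig rho0; split.
  exists (rc rho); split.
    apply/eigenvalueP; exists (map_mx rc l).
      by rewrite -map_mxM eig map_mxZ.
    rewrite map_mx_eq0; apply/negP => /eqP l0.
    have := lgt0 (Ordinal m0); rewrite l0 mxE; lra.
  by rewrite ger0_norm // ler0c.
move=> a; rewrite -eig_tr => /eigenvalueP [w Hw w0].
set B := map_mx rc M.
have Ei : forall i, a * w 0 i = \sum_j w 0 j * B i j.
  move=> i; have := congr1 (fun v : 'rV[C]_m => v 0 i) Hw.
  by rewrite !mxE => <-; apply: eq_bigr => j _; rewrite !mxE.
have Bn : forall i j, `|B i j| = rc (M i j).
  by move=> i j; rewrite mxE ger0_norm // ler0c.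
set X := \sum_i rc (l 0 i) * `|w 0 i|.
have X0 : 0 < X.
  rewrite lt_def; apply/andP; split; last first.
    by apply: sumr_ge0 => i _; rewrite mulr_ge0 // ?ler0c ?normr_ge0 // ltW.
  rewrite psumr_eq0; last by move=> i _; rewrite mulr_ge0 // ?ler0c ?normr_ge0 // ltW.
  apply/allPn; have : ~~ [forall i, w 0 i == 0].
    apply: contra w0 => /forallP H.
    apply/eqP/matrixP => i j; rewrite (ord1 i) mxE.
    exact/eqP/H.
  rewrite negb_forall => /existsP [i wi].
  exists i; first exact: mem_index_enum.
  rewrite mulf_eq0 negb_or normr_eq0 wi andbT.
  by rewrite (inj_eq (@complexI R)); apply/lt0r_neq0/lgt0.
rewrite -(ler_pM2r X0).
have -> : `|a| * X = \sum_i rc (l 0 i) * `|a * w 0 i|.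
  rewrite mulr_sumr; apply: eq_bigr => i _; rewrite normrM; ring.
apply: (@le_trans _ _ (\sum_i rc (l 0 i) * \sum_j `|w 0 j| * rc (M i j))).
  apply: ler_sum => i _; apply: ler_wpM2l; first by rewrite ler0c ltW.
  rewrite Ei; apply: (le_trans (ler_norm_sum _ _ _)).
  by apply: ler_sum => j _; rewrite normrM Bn.
under eq_bigr do rewrite mulr_sumr.
rewrite exchange_big /= /X mulr_sumr; apply: ler_sum => j _; rewrite le_eqVlt; apply/orP; left; apply/eqP.
have := congr1 (fun v : 'rV[R]_m => rc (v 0 j)) eig; rewrite !mxE rmorph_sum rmorphM /=.
move=> E; rewrite mulrA -E mulr_suml; apply: eq_bigr => i _.
rewrite rmorphM /=; ring.
Qed.

End Perron.
Section Orbit.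
Variable R : realType.
Variables (n : nat) (k : R).
Hypothesis hn : (1 <= n)%N.
Hypothesis hk : 0 < k < 2^-1.
Hypothesis hkn : (2 + 2 * k) ^+ n * k = 1.
Local Notation b := (2 * (1 + k)).

Lemma tent1 x : x <= - 2^-1 -> tent k x = b * (x + 1) - 1.
Proof. by move=> h; rewrite /tent h. Qed.
Lemma tent2 x : - 2^-1 < x < 0 -> tent k x = - (b * x) - 1.
Proof.
move=> /andP[h1 h2]; rewrite /tent.
have -> : (x <= - 2^-1) = false by apply/negbTE; rewrite -ltNge.
rewrite h2; ring.
Qed.
Lemma tent3 x : 0 < x <= 2^-1 -> tent k x = - (b * x) + 1.
Proof.
move=> /andP[h1 h2]; rewrite /tent.
have -> : (x <= - 2^-1) = false by apply/negbTE; rewrite -ltNge; lra.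
have -> : (x < 0) = false by apply/negbTE; rewrite -leNgt; lra.
have -> : (x == 0) = false by apply/negbTE; rewrite gt_eqF.
rewrite h2; ring.
Qed.
Lemma tent4 x : 2^-1 < x -> tent k x = b * (x - 1) + 1.
Proof.
move=> h; rewrite /tent.
have -> : (x <= - 2^-1) = false by apply/negbTE; rewrite -ltNge; lra.
have -> : (x < 0) = false by apply/negbTE; rewrite -leNgt; lra.
have -> : (x == 0) = false by apply/negbTE; rewrite gt_eqF //; lra.
have -> : (x <= 2^-1) = false by apply/negbTE; rewrite -ltNge.
done.
Qed.

Lemma b2 : 2 < b.
Proof. case/andP: hk => h1 h2; lra. Qed.

Lemma small i : (i < n)%N -> 0 < b ^+ i * k < 2^-1.
Proof.
move=> lin; case/andP: hk => k0 k1.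
have bgt1 : 1 < b by have := b2; lra.
have u0 : 0 < b ^+ i * k by rewrite mulr_gt0 // exprn_gt0 //; lra.
have E : b ^+ i * k * b ^+ (n - i) = 1.
  rewrite mulrAC -exprD subnKC ?(ltnW lin) //.
  by have -> : b = 2 + 2 * k by ring.
have v : b <= b ^+ (n - i).
  by rewrite -{1}(expr1 b) ler_eXn2l //; lia.
rewrite u0 /=; nra.
Qed.

Lemma orbp i : (1 <= i <= n)%N -> iter i (tent k) k = 1 - b ^+ i * k.
Proof.
elim: i => [//|i IH] /andP[_ hi].
case: i IH hi => [|i] IH hi.
  rewrite /= tent3; first by rewrite expr1; ring.
  by case/andP: hk => h1 h2; rewrite h1 ltW.
rewrite iterS IH; last by apply/andP; split => //; lia.
have := small _ hi => /andP[u0 u1].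
rewrite tent4; last lra.
rewrite (exprS b i.+1); ring.
Qed.

Lemma orbn i : (1 <= i <= n)%N -> iter i (tent k) (- k) = b ^+ i * k - 1.
Proof.
elim: i => [//|i IH] /andP[_ hi].
case: i IH hi => [|i] IH hi.
  rewrite /= tent2; first by rewrite expr1; ring.
  by case/andP: hk => h1 h2; apply/andP; split; lra.
rewrite iterS IH; last by apply/andP; split => //; lia.
have := small _ hi => /andP[u0 u1].
rewrite tent1; last lra.
rewrite (exprS b i.+1); ring.
Qed.

Lemma bn : b ^+ n * k = 1.
Proof. by have -> : b = 2 + 2 * k by ring. Qed.

Lemma orbp_n : iter n (tent k) k = 0.
Proof. by rewrite orbp ?hn ?leqnn // bn subrr. Qed.
Lemma orbn_n : iter n (tent k) (- k) = 0.
Proof. by rewrite orbn ?hn ?leqnn // bn subrr. Qed.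

Lemma orb_neg i : (i <= n)%N -> iter i (tent k) (- k) = - iter i (tent k) k.
Proof.
case: i => [//|i] hi; rewrite orbp ?orbn //; ring.
Qed.

Lemma orb_bounds i : (i < n)%N ->
  0 < iter i (tent k) k < 1 /\ iter i (tent k) k != 2^-1.
Proof.
case: i => [|i] hi.
  rewrite /=; case/andP: hk => h1 h2; split; first (apply/andP; split; lra).
  by rewrite /= lt_eqF.
rewrite orbp; last lia.
have := small _ hi => /andP[u0 u1]; split; first (apply/andP; split; lra).
by rewrite gt_eqF //; lra.
Qed.


Definition five : seq R := [:: -1; - 2^-1; 0; 2^-1; 1].
Definition L := five ++ [seq iter i (tent k) k | i <- iota 0 n]
   ++ [seq iter i (tent k) (- k) | i <- iota 0 n].

Lemma mem_pts x : (x \in points n k) = (x \in L).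
Proof. by rewrite /points mem_sort mem_undup. Qed.

Lemma orb_inj : {in iota 0 n &, injective (fun i => iter i (tent k) k)}.
Proof.
move=> i j; rewrite !mem_iota !add0n => /andP[_ hi] /andP[_ hj].
have bgt1 : 1 < b by have := b2; lra.
case/andP: hk => k0 k1.
case: i hi => [|i] hi; case: j hj => [|j] hj //.
- move=> E; rewrite (orbp j.+1) in E; last lia; rewrite /= in E.
  exfalso; have := small _ hj; lra.
- move=> E; rewrite (orbp i.+1) in E; last lia; rewrite /= in E.
  exfalso; have := small _ hi; lra.
move=> E; rewrite (orbp i.+1) ?(orbp j.+1) in E; try lia.
have E' : b ^+ i.+1 = b ^+ j.+1.
  apply: (mulIf (x := k)); first by rewrite gt_eqF.
  lra.
apply/eqP; rewrite eqn_leq -!(ler_eXn2l bgt1) E' lexx; done.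
Qed.

Lemma notin_five x : 0 < `|x| < 1 -> `|x| != 2^-1 -> x \notin five.
Proof.
move=> /andP[h1 h2] h3; rewrite !inE.
repeat (apply/norP; split); apply/eqP => E; rewrite E in h1 h2 h3.
all: rewrite ?normrN ?normr1 ?normr0 ?ger0_norm in h1 h2 h3; try lra.
Qed.

Lemma uniq_L : uniq L.
Proof.
rewrite /L !cat_uniq.
have f5 : uniq five.
  apply: (sorted_uniq (@lt_trans _ R) (@ltxx _ R)).
  rewrite /= !andbT; repeat (apply/andP; split); lra.
have uo : uniq [seq iter i (tent k) k | i <- iota 0 n].
  by rewrite map_inj_in_uniq ?iota_uniq //; apply: orb_inj.
have uo' : uniq [seq iter i (tent k) (- k) | i <- iota 0 n].
  have -> : [seq iter i (tent k) (-k) | i <- iota 0 n] =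
            [seq - iter i (tent k) k | i <- iota 0 n].
    by apply/eq_in_map => i; rewrite mem_iota add0n => /andP[_ hi]; rewrite orb_neg // ltnW.
  rewrite (map_comp (fun x => - x) (fun i => iter i (tent k) k)).
  by rewrite map_inj_uniq //; apply: oppr_inj.
rewrite f5 uo uo' /= andbT; apply/andP; split.
  rewrite has_cat negb_or; apply/andP; split; apply/hasPn => x.
    case/mapP => i; rewrite mem_iota add0n => /andP[_ hi] ->.
    have [/andP [h1 h2] h3] := orb_bounds _ hi.
    by apply: notin_five; rewrite ?normrN gtr0_norm //; lra.
  case/mapP => i; rewrite mem_iota add0n => /andP[_ hi] ->.
  rewrite orb_neg ?(ltnW hi) //.
  have [/andP [h1 h2] h3] := orb_bounds _ hi.
  by apply: notin_five; rewrite ?normrN gtr0_norm //; lra.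
apply/hasPn => x; case/mapP => i; rewrite mem_iota add0n => /andP[_ hi] ->.
rewrite orb_neg ?(ltnW hi) //.
apply/mapP => [[j]]; rewrite mem_iota add0n => /andP[_ hj] E.
have [/andP [h1 h2] h3] := orb_bounds _ hi.
have [/andP [h1' h2'] h3'] := orb_bounds _ hj.
lra.
Qed.


Local Notation N := (2 * n + 4)%N.
Local Notation r := (points n k).
Local Notation p i := (pt n k i).

Lemma size_pts : size r = N.+1.
Proof.
rewrite /points size_sort undup_id ?uniq_L // /L !size_cat !size_map size_iota /=.
lia.
Qed.

Lemma sorted_pts : sorted <%R r.
Proof. by rewrite /points sort_lt_sorted undup_uniq. Qed.

Lemma ptlt {i j : nat} : (i < j)%N -> (j <= N)%N -> p i < p j.
Proof.
move=> ij jN; apply: (sorted_ltn_nth (@lt_trans _ R) 0 sorted_pts) => //;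
  rewrite inE size_pts; lia.
Qed.

Lemma ptle {i j : nat} : (i <= j)%N -> (j <= N)%N -> p i <= p j.
Proof.
rewrite leq_eqVlt => /orP[/eqP->|ij] jN; first by rewrite lexx.
by apply/ltW/ptlt.
Qed.

Lemma pt_idx {i j : nat} : (i <= N)%N -> (j <= N)%N -> p i < p j -> (i < j)%N.
Proof.
move=> iN jN h; case: (ltnP i j) => // ji.
by have := ptle ji iN; rewrite leNgt h.
Qed.

Lemma pt_mem i : (i <= N)%N -> p i \in r.
Proof. by move=> iN; rewrite /pt mem_nth // size_pts. Qed.

Lemma mem_pt x : x \in r -> exists2 a, (a <= N)%N & p a = x.
Proof.
move=> xr; exists (index x r); last by rewrite /pt nth_index.
by have := xr; rewrite -index_mem size_pts.
Qed.

Lemma no_between j z : (j < N)%N -> z \in r -> pt n k j < z < pt n k j.+1 -> False.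
Proof.
move=> jN /mem_pt [a aN <-] /andP[h1 h2].
have := pt_idx (ltnW jN) aN h1; have := pt_idx aN jN h2; lia.
Qed.

Lemma in_five x : x \in five -> x \in r.
Proof. by move=> h; rewrite mem_pts /L mem_cat h. Qed.

Lemma in_orb i : (i < n)%N -> iter i (tent k) k \in r.
Proof.
move=> hi; rewrite mem_pts /L !mem_cat; apply/orP; right; apply/orP; left.
by apply/mapP; exists i => //; rewrite mem_iota add0n.
Qed.

Lemma in_orbn i : (i < n)%N -> iter i (tent k) (- k) \in r.
Proof.
move=> hi; rewrite mem_pts /L !mem_cat; apply/orP; right; apply/orP; right.
by apply/mapP; exists i => //; rewrite mem_iota add0n.
Qed.

Lemma in_k : k \in r. Proof. exact: (in_orb 0 hn). Qed.
Lemma in_mk : - k \in r. Proof. exact: (in_orbn 0 hn). Qed.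

Lemma tent_closed x : x \in r -> x != - 2^-1 -> x != 0 -> x != 2^-1 ->
  tent k x \in r.
Proof.
rewrite mem_pts /L !mem_cat => /or3P [H|H|H] h1 h2 h3.
- move: H h1 h2 h3; rewrite !inE.
  move=> /orP[/eqP->|/orP[/eqP->|/orP[/eqP->|/orP[/eqP->|/eqP->]]]];
    rewrite ?eqxx //= => _ _ _.
    rewrite tent1; last lra.
    by rewrite addNr mulr0 sub0r; apply: in_five; rewrite !inE eqxx.
  rewrite tent4; last lra.
  by rewrite subrr mulr0 add0r; apply: in_five; rewrite !inE eqxx !orbT.
- case/mapP: H h1 h2 h3 => i; rewrite mem_iota add0n => /andP[_ hi] -> _ _ _.
  rewrite -iterS; case: (ltnP i.+1 n) => h; first exact: in_orb.
  have -> : i.+1 = n by lia.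
  by rewrite orbp_n; apply: in_five; rewrite !inE eqxx !orbT.
- case/mapP: H h1 h2 h3 => i; rewrite mem_iota add0n => /andP[_ hi] -> _ _ _.
  rewrite -iterS; case: (ltnP i.+1 n) => h; first exact: in_orbn.
  have -> : i.+1 = n by lia.
  by rewrite orbn_n; apply: in_five; rewrite !inE eqxx !orbT.
Qed.


Lemma cl1 x : x \in r -> x <= - 2^-1 -> b * (x + 1) - 1 \in r.
Proof.
move=> xr hx; case: (eqVneq x (- 2^-1)) => [->|h1].
  by rewrite (_ : _ - 1 = k) ?in_k //; lra.
rewrite -tent1 //; apply: tent_closed => //; apply/negP => /eqP E; lra.
Qed.

Lemma cl2 x : x \in r -> - 2^-1 <= x <= 0 -> - (b * x) - 1 \in r.
Proof.
move=> xr /andP[hx1 hx2]; case: (eqVneq x (- 2^-1)) => [->|h1].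
  by rewrite (_ : _ - 1 = k) ?in_k //; lra.
case: (eqVneq x 0) => [->|h2].
  by rewrite mulr0 oppr0 sub0r; apply: in_five; rewrite !inE eqxx.
have hx : - 2^-1 < x < 0 by rewrite !lt_def h1 (eq_sym 0 x) h2 hx1 hx2.
rewrite -tent2 //; apply: tent_closed => //; apply/negP => /eqP E; lra.
Qed.

Lemma cl3 x : x \in r -> 0 <= x <= 2^-1 -> - (b * x) + 1 \in r.
Proof.
move=> xr /andP[hx1 hx2]; case: (eqVneq x 0) => [->|h1].
  by rewrite mulr0 oppr0 add0r; apply: in_five; rewrite !inE eqxx !orbT.
case: (eqVneq x 2^-1) => [->|h2].
  by rewrite (_ : _ + 1 = - k) ?in_mk //; lra.
have hx : 0 < x <= 2^-1 by rewrite lt_def h1 hx1 hx2.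
rewrite -tent3 //; apply: tent_closed => //; apply/negP => /eqP E; lra.
Qed.

Lemma cl4 x : x \in r -> 2^-1 <= x -> b * (x - 1) + 1 \in r.
Proof.
move=> xr hx; case: (eqVneq x 2^-1) => [->|h1].
  by rewrite (_ : _ + 1 = - k) ?in_mk //; lra.
have hx' : 2^-1 < x by rewrite lt_def h1 hx.
rewrite -tent4 //; apply: tent_closed => //; apply/negP => /eqP E; lra.
Qed.

Lemma aff_pos s t P Q : 0 < s -> P < Q ->
  (forall y, P < y < Q -> tent k y = s * y + t) ->
  forall x, (exists y, P < y < Q /\ tent k y = x) <-> s * P + t < x < s * Q + t.
Proof.
move=> s0 PQ E x; split.
  move=> [y [/andP[h1 h2] <-]]; rewrite E; last by rewrite h1 h2.
  by rewrite !ltrD2r !ltr_pM2l // h1 h2.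
move=> /andP[h1 h2]; exists ((x - t) / s); split.
  rewrite ltr_pdivlMr // ltr_pdivrMr //; apply/andP; split; lra.
rewrite E; first by rewrite mulrC divfK ?gt_eqF // subrK.
rewrite ltr_pdivlMr // ltr_pdivrMr //; apply/andP; split; lra.
Qed.

Lemma aff_neg s t P Q : 0 < s -> P < Q ->
  (forall y, P < y < Q -> tent k y = - (s * y) + t) ->
  forall x, (exists y, P < y < Q /\ tent k y = x) <-> - (s * Q) + t < x < - (s * P) + t.
Proof.
move=> s0 PQ E x; split.
  move=> [y [/andP[h1 h2] <-]]; rewrite E; last by rewrite h1 h2.
  by rewrite !ltrD2r !ltrN2 !ltr_pM2l // h1 h2.
move=> /andP[h1 h2]; exists ((t - x) / s); split.
  rewrite ltr_pdivlMr // ltr_pdivrMr //; apply/andP; split; lra.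
rewrite E; first by rewrite mulrC divfK ?gt_eqF // opprB subrK.
rewrite ltr_pdivlMr // ltr_pdivrMr //; apply/andP; split; lra.
Qed.


Definition img P Q x := exists y, P < y < Q /\ tent k y = x.

Lemma image_j j : (j < N)%N -> exists lo hi, [/\ lo \in r, hi \in r, lo < hi,
   hi - lo = b * (p j.+1 - p j) & forall x, img (p j) (p j.+1) x <-> lo < x < hi].
Proof.
move=> jN.
have PQ : p j < p j.+1 by apply: ptlt.
have Pr : p j \in r by apply/pt_mem/ltnW.
have Qr : p j.+1 \in r by apply/pt_mem.
have nb := no_between _ _ jN.
have b0 : 0 < b by have := b2; lra.
have dpos : 0 < b * (p j.+1 - p j) by rewrite mulr_gt0 // subr_gt0.
move: PQ Pr Qr nb dpos; set P := p j; set Q := p j.+1 => PQ Pr Qr nb dpos.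
have m1 : - 2^-1 \in r by apply: in_five; rewrite !inE eqxx !orbT.
have m0 : 0 \in r by apply: in_five; rewrite !inE eqxx !orbT.
have m2 : 2^-1 \in r by apply: in_five; rewrite !inE eqxx !orbT.
case: (lerP Q (- 2^-1)) => hQ1.
  have E : forall y, P < y < Q -> tent k y = b * y + (b - 1).
    by move=> y /andP[h1 h2]; rewrite tent1; [ring | lra].
  exists (b * P + (b - 1)), (b * Q + (b - 1)); split.
  - by rewrite (_ : _ + _ = b * (P + 1) - 1); [apply: cl1 => //; lra | ring].
  - by rewrite (_ : _ + _ = b * (Q + 1) - 1); [apply: cl1 | ring].
  - lra.
  - ring.
  - exact: aff_pos.
have hP1 : - 2^-1 <= P.
  rewrite leNgt; apply/negP => h; apply: (nb _ m1); lra.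
case: (lerP Q 0) => hQ2.
  have E : forall y, P < y < Q -> tent k y = - (b * y) + (- 1).
    by move=> y /andP[h1 h2]; rewrite tent2; [ring | apply/andP; split; lra].
  exists (- (b * Q) + (- 1)), (- (b * P) + (- 1)); split.
  - by apply: cl2 => //; apply/andP; split; lra.
  - by apply: cl2 => //; apply/andP; split; lra.
  - lra.
  - ring.
  - exact: aff_neg.
have hP2 : 0 <= P.
  rewrite leNgt; apply/negP => h; apply: (nb _ m0); lra.
case: (lerP Q 2^-1) => hQ3.
  have E : forall y, P < y < Q -> tent k y = - (b * y) + 1.
    by move=> y /andP[h1 h2]; rewrite tent3; [ring | apply/andP; split; lra].
  exists (- (b * Q) + 1), (- (b * P) + 1); split.
  - by apply: cl3 => //; apply/andP; split; lra.
  - by apply: cl3 => //; apply/andP; split; lra.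
  - lra.
  - ring.
  - exact: aff_neg.
have hP3 : 2^-1 <= P.
  rewrite leNgt; apply/negP => h; apply: (nb _ m2); lra.
have E : forall y, P < y < Q -> tent k y = b * y + (1 - b).
  by move=> y /andP[h1 h2]; rewrite tent4; [ring | lra].
exists (b * P + (1 - b)), (b * Q + (1 - b)); split.
- by rewrite (_ : _ + _ = b * (P - 1) + 1); [apply: cl4 | ring].
- by rewrite (_ : _ + _ = b * (Q - 1) + 1); [apply: cl4 => //; lra | ring].
- lra.
- ring.
- exact: aff_pos.
Qed.


Lemma sum_window (f : nat -> R) (a c M : nat) : (a <= c <= M)%N ->
  \sum_(i < M) (f i.+1 - f i) * (if (a <= i < c)%N then 1 else 0) = f c - f a.
Proof.
move=> /andP[ac cM].
rewrite -(big_mkord xpredT (fun i => (f i.+1 - f i) * (if (a <= i < c)%N then 1 else 0))).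
rewrite (big_cat_nat (leq0n a) (leq_trans ac cM)) /= (big_cat_nat ac cM) /=.
rewrite [X in X + _]big_nat_cond [X in X + _]big1; last first.
  by move=> i /andP[/andP[_ h] _]; rewrite ifF ?mulr0 // leqNgt h.
rewrite [X in _ + (_ + X)]big_nat_cond [X in _ + (_ + X)]big1; last first.
  by move=> i /andP[/andP[h _] _]; rewrite ifF ?mulr0 // ltnNge h andbF.
rewrite add0r addr0 -telescope_sumr //; apply: eq_big_nat => i /andP[h1 h2].
by rewrite h1 h2 mulr1.
Qed.

Lemma colsum (j : 'I_N) :
  \sum_(i < N) (p i.+1 - p i) * Amx n k i j = b * (p j.+1 - p j).
Proof.
have [lo [hi [lor hir lohi D Im]]] := image_j _ (ltn_ord j).
have [a aN ea] := mem_pt _ lor; have [c cN ec] := mem_pt _ hir.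
have ac : (a < c)%N by apply: pt_idx aN cN _; rewrite ea ec.
have HA : forall i : 'I_N, Amx n k i j = if (a <= i < c)%N then 1 else 0.
  move=> i; rewrite mxE; have iN := ltn_ord i.
  case: (boolP (a <= i < c)%N) => h.
    rewrite asboolT //; move=> x /andP[hx1 hx2]; apply/Im; rewrite -ea -ec.
    case/andP: h => h1 h2; have := ptle h1 (ltnW iN); have := ptle h2 cN.
    move=> q1 q2; apply/andP; split; lra.
  rewrite asboolF //; move=> H.
  have hpi : p i < p i.+1 := ptlt (ltnSn i) iN.
  have hx : p i < (p i + p i.+1) / 2 < p i.+1 by apply/andP; split; lra.
  have /Im := H _ hx; rewrite -ea -ec => /andP[l1 l2].
  move: h; rewrite negb_and -ltnNge -leqNgt => /orP [h|h].
    have := ptle h aN; lra.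
  have := ptle h (ltnW iN); lra.
under eq_bigr do rewrite HA.
rewrite sum_window; first by rewrite ea ec.
by rewrite (ltnW ac) cN.
Qed.

End Orbit.

Theorem corollary11 (R : realType) (n : nat) (k : R) :
  (1 <= n)%N -> 0 < k < 2^-1 -> (2 + 2 * k) ^+ n * k = 1 ->
  is_spectral_radius (Amx n k) (2 * (1 + k))
  /\ is_spectral_radius ((2 * (1 + k))^-1 *: Amx n k) 1.
Proof.
move=> hn hk hkn.
pose l : 'rV[R]_(2 * n + 4) := \row_i (pt n k i.+1 - pt n k i).
have lpos : forall i, 0 < l 0 i.
  move=> i; rewrite mxE subr_gt0.
  exact: (@ptlt R n k hn hk hkn i i.+1 (ltnSn i) (ltn_ord i)).
have eig : l *m Amx n k = (2 * (1 + k)) *: l.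
  apply/rowP => j; rewrite !mxE.
  under eq_bigr do rewrite mxE.
  exact: (colsum _ _ _ hn hk hkn j).
have b0 : 0 < 2 * (1 + k) by case/andP: hk => h1 h2; lra.
have Age0 : forall i j, 0 <= Amx n k i j by move=> i j; rewrite mxE; case: ifP.
have m0 : (0 < 2 * n + 4)%N by rewrite addn4.
split.
  exact: (@perron R _ _ _ _ m0 Age0 lpos eig (ltW b0)).
apply: (@perron R _ _ l _ m0 _ lpos _ ler01).
  by move=> i j; rewrite mxE mulr_ge0 // invr_ge0 ltW.
by rewrite -scalemxAr eig scalerA mulVf ?gt_eqF // scale1r.
Qed.
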